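(* Let $q$ be a prime power, let $d\in\mathbb{Z}_{\geqslant 1}$, let $\mathcal{Q}_d$ be a monic irreducible polynomial in $\mathbb{F}_q[T]$ of degree $d$, and let $s,\ell\in\mathbb{Z}_{\geqslant 0}$ with $0\leqslant \ell<d$. Let $F_0=1$ and $F_i=(-1)^i+(T^{q^i}-T)F_{i-1}$ for $i\in\mathbb{Z}_{\geqslant 1}$. Then $$F_{sd+\ell}\equiv(-1)^{sd}F_\ell \pmod{\mathcal{Q}_d}.$$ *)

(* Defs.v *)
From mathcomp Require Import all_boot all_order all_algebra all_field.
Set Implicit Arguments. Unset Strict Implicit. Unset Printing Implicit Defensive.
Import GRing.Theory.
Local Open Scope ring_scope.

Fixpoint Fseq (F : finFieldType) (i : nat) : {poly F} :=
  match i with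
  | 0 => 1
  | i'.+1 => (-1) ^+ i'.+1 + ('X^(#|F| ^ i'.+1) - 'X) * Fseq F i'
  end.

(* Main.v *)
Require Import Defs.
From mathcomp Require Import all_boot all_order all_algebra all_field.
From mathcomp Require Import ring.
Import GRing.Theory.
Local Open Scope ring_scope.

Section S.
Variables (F : finFieldType) (Q : {poly F}) (hI : monic_irreducible_poly Q).
Let L := {poly %/ Q with hI}.
Let phi (p : {poly F}) : L := in_qpoly Q p.
Let phiD p r : phi (p + r) = phi p + phi r. Proof. exact: in_qpolyD. Qed.
Let phiM p r : phi (p * r) = phi p * phi r. Proof. exact: in_qpolyM. Qed.
Let phi1 : phi 1 = 1. Proof. exact: in_qpoly1. Qed.
Let phiN p : phi (- p) = - phi p. Proof. exact: (raddfN (in_qpoly Q)). Qed.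
Let phiB p r : phi (p - r) = phi p - phi r. Proof. by rewrite phiD phiN. Qed.
Let phiX p n : phi (p ^+ n) = phi p ^+ n.
Proof. elim: n => [|n IH]; first by rewrite !expr0 phi1. by rewrite !exprS phiM IH. Qed.
Let phi0 p : phi p = 0 -> Q %| p.
Proof.
move=> H.
have : polyn (in_qpoly Q p) = 0 by rewrite -/(phi p) H.
rewrite /in_qpoly /= (mk_monicE hI) => H2.
by rewrite Pdiv.Field.dvdpE /Pdiv.Ring.rdvdp H2.
Qed.

Variable d : nat.
Hypothesis sQ : size Q = d.+1.
Let x := phi 'X.
Let cardL (y : L) : y ^+ (#|F| ^ d) = y.
Proof.
have := expf_card y.
by rewrite card_qfpoly sQ.
Qed.
Let xfix k : x ^+ (#|F| ^ (k * d)) = x.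
Proof.
elim: k => [|k IH]; first by rewrite mul0n expn0 expr1.
by rewrite mulSn expnD exprM cardL.
Qed.
Let xshift s l : (0 < s)%N -> x ^+ (#|F| ^ (s * d + l)) = x ^+ (#|F| ^ l).
Proof. by move=> _; rewrite expnD exprM xfix. Qed.
Let phiF i : phi (Fseq F i.+1) = (-1) ^+ i.+1 + (x ^+ (#|F| ^ i.+1) - x) * phi (Fseq F i).
Proof. by rewrite /= phiD phiM phiB phiX phiX phiN phi1. Qed.
Lemma mainL s l : (0 < s)%N -> phi (Fseq F (s * d + l)) = (-1) ^+ (s * d) * phi (Fseq F l).
Proof.
move=> s0; elim: l => [|l IH].
  rewrite addn0 /= phi1 mulr1.
  case E: (s * d)%N => [|n]; first by rewrite /= phi1 expr0.
  by rewrite phiF -E xfix subrr mul0r addr0.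
rewrite addnS phiF IH -addnS xshift // phiF exprD. ring.
Qed.
Lemma main s l : Q %| (Fseq F (s * d + l) - (-1) ^+ (s * d) * Fseq F l).
Proof.
case: s => [|s]; first by rewrite mul0n add0n expr0 mul1r subrr dvdp0.
apply: phi0; by rewrite phiB phiM mainL // phiX phiN phi1 subrr.
Qed.
End S.

Theorem lemma3p1 (F : finFieldType) (d : nat) (Q : {poly F}) (s l : nat) :
  (1 <= d)%N -> Q \is monic -> irreducible_poly Q -> size Q = d.+1 ->
  (l < d)%N ->
  Q %| (Fseq F (s * d + l) - (-1) ^+ (s * d) * Fseq F l).
Proof.
move=> _ mQ iQ sQ _.
have hI : monic_irreducible_poly Q by split.
exact: (@main F Q hI d sQ s l).
Qed.
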